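(* For $k\ge 1$, rectangular reduction gives a bijection $\mathrm{red}:\mathcal M^{\Box}_{2k}\to\mathcal N_k$. In particular $M^\Box_{2k}=N_k$.
   Context: Colorings. Each square is colored water or land. Two distinct squares are adjacent if they share an edge after all edge identifications; a set of squares is connected if its induced adjacency graph is connected (empty set counts as connected). (N1): the water is connected. For an interior (non-boundary) vertex $v$, its square-degree is the number of distinct squares having $v$ as a corner. (N2$\Box$): no interior vertex of square-degree $4$ has all incident squares water. A $2\times k$ Nurikabe rectangle is a coloring of the $2\times k$ grid (no identifications) with connected water and no $2\times 2$ block of water squares; $\mathcal N_k$ is the set of these, $N_k=|\mathcal N_k|$. Tile $[0,n]\times[0,1]$ by unit squares $[j-1,j]\times[0,1]$, called square $j$. The $1\times n$ Möbius strip identifies $(x,1)\sim(n-x,0)$ for $x\in[0,n]$; its boundary is the image of the vertical sides. $\mathcal M^\Box_n$ is the set of colorings of the $1\times n$ Möbius strip satisfying (N1) and (N2$\Box$), $M^\Box_n=|\mathcal M^\Box_n|$. Rectangular reduction: for a coloring of the $1\times 2k$ Möbius strip, $\mathrm{red}$ gives the coloring of the $2\times k$ grid whose column $j$ ($1\le j\le k$) has top square colored as square $j$ and bottom square colored as square $2k+1-j$. *)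

(* Defs.v *)
From mathcomp Require Import all_boot.
Set Implicit Arguments. Unset Strict Implicit. Unset Printing Implicit Defensive.

(* Colorings: true = water, false = land. Squares are 0-based:
   square index i : 'I_n is the paper's square i+1, i.e. [i,i+1] x [0,1]. *)

(* Edges after identification, canonical representatives:
   (x, true)  = vertical edge {x} x [0,1];
   (x, false) = bottom horizontal edge [x,x+1] x {0}.
   The top edge [i,i+1] x {1} of square i is identified with the bottom edge
   [n-i-1, n-i] x {0}. *)
Definition mob_edges (n : nat) (i : 'I_n) : seq (nat * bool) :=
  [:: (val i, true); ((val i).+1, true); (n - (val i).+1, false); (val i, false)].

Definition mob_adj (n : nat) : rel 'I_n :=
  fun i j => (i != j) && has (fun e => e \in mob_edges j) (mob_edges i).

(* Vertices after identification, canonical representatives: the bottom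
   vertex (x,0), 0 <= x <= n; the top vertex (x,1) is identified with (n-x,0).
   Corners of square i: (i,0), (i+1,0), (i,1)~(n-i,0), (i+1,1)~(n-i-1,0). *)
Definition mob_corners (n : nat) (i : 'I_n) : seq nat :=
  [:: val i; (val i).+1; n - val i; n - (val i).+1].

(* The class of (v,0) is {(v,0),(n-v,1)}; it meets the boundary (the image of
   the vertical sides x = 0, x = n) iff v = 0 or v = n. *)
Definition mob_interior (n v : nat) : bool := (0 < v) && (v < n).

Definition mob_incident (n v : nat) : {set 'I_n} :=
  [set i : 'I_n | v \in mob_corners i].

Definition water_connected (T : finType) (adj : rel T) (c : {ffun T -> bool}) : bool :=
  [forall a, forall b, (c a && c b) ==>
     connect (fun x y => [&& c x, c y & adj x y]) a b].

Definition mob_N2box (n : nat) (c : {ffun 'I_n -> bool}) : bool :=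
  [forall v : 'I_n.+1, (mob_interior n v && (#|mob_incident n v| == 4)) ==>
     ~~ [forall i in mob_incident n v, c i]].

Definition mob_ok (n : nat) (c : {ffun 'I_n -> bool}) : bool :=
  water_connected (@mob_adj n) c && mob_N2box c.

Definition MBox (n : nat) : {set {ffun 'I_n -> bool}} := [set c | mob_ok c].

(* square (r, j): row r (0 = top, 1 = bottom), column j (0-based) *)
Definition grid_adj (k : nat) : rel ('I_2 * 'I_k) :=
  fun p q =>
    ((p.1 == q.1) && (((val p.2).+1 == val q.2) || ((val q.2).+1 == val p.2)))
    || ((p.2 == q.2) && (p.1 != q.1)).

Definition no_2x2_water (k : nat) (g : {ffun 'I_2 * 'I_k -> bool}) : bool :=
  [forall j1 : 'I_k, forall j2 : 'I_k, ((val j1).+1 == val j2) ==>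
     ~~ [forall r : 'I_2, g (r, j1) && g (r, j2)]].

Definition nuri_ok (k : nat) (g : {ffun 'I_2 * 'I_k -> bool}) : bool :=
  water_connected (@grid_adj k) g && no_2x2_water g.

Definition NRect (k : nat) : {set {ffun 'I_2 * 'I_k -> bool}} := [set g | nuri_ok g].

(* color of 0-based square m of an n-strip (m < n), default land otherwise *)
Definition sqcol (n : nat) (c : {ffun 'I_n -> bool}) (m : nat) : bool :=
  if insub m is Some i then c i else false.

(* column j (0-based): top = square j, bottom = square 2k-1-j (0-based),
   i.e. the paper's squares j+1 and 2k+1-(j+1). *)
Definition red (k : nat) (c : {ffun 'I_(k.*2) -> bool}) : {ffun 'I_2 * 'I_k -> bool} :=
  [ffun p : 'I_2 * 'I_k =>
     if val p.1 == 0 then sqcol c (val p.2) else sqcol c (k.*2 - (val p.2).+1)].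

(* Main.v *)
Require Import Defs.
From mathcomp Require Import all_boot zify.
Set Implicit Arguments. Unset Strict Implicit. Unset Printing Implicit Defensive.
Set Warnings "-notation-overridden".

Definition phin k (r j : nat) := if r == 0 then j else k.*2 - j.+1.
Lemma phin_lt k r j : j < k -> phin k r j < k.*2.
Proof. rewrite /phin; case: (r == 0); lia. Qed.
Definition phi k (p : 'I_2 * 'I_k) : 'I_(k.*2) := Ordinal (phin_lt p.1 (ltn_ord p.2)).

Lemma phi_inj k : injective (@phi k).
Proof.
move=> [[r1 h1] [j1 i1]] [[r2 h2] [j2 i2]] /(congr1 val); rewrite /= /phin => h.
have [e1 e2] : r1 = r2 /\ j1 = j2.
  move: h; case: r1 h1 => [|[|//]] _; case: r2 h2 => [|[|//]] _ /=; lia.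
subst; congr pair; apply: val_inj => //.
Qed.

Lemma phi_bij k : bijective (@phi k).
Proof.
apply: inj_card_bij; first exact: phi_inj.
by rewrite card_prod !card_ord mul2n.
Qed.

Lemma sqcolE n (c : {ffun 'I_n -> bool}) m (h : m < n) : sqcol c m = c (Ordinal h).
Proof.
rewrite /sqcol; case: insubP => [i _ /= eqi|]; last by rewrite h.
by congr (c _); apply: val_inj.
Qed.

Lemma redE k (c : {ffun 'I_(k.*2) -> bool}) p : red c p = c (phi p).
Proof.
rewrite /red ffunE.
case: p => [r j] /=.
have h := phin_lt r (ltn_ord j).
have -> : phi (r, j) = Ordinal h by apply: val_inj.
rewrite -(sqcolE c h) /phin; by case: (val r == 0).
Qed.

Lemma adjE k (p q : 'I_2 * 'I_k) : grid_adj p q = mob_adj (phi p) (phi q).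
Proof.
rewrite /grid_adj /mob_adj /mob_edges -val_eqE /=.
case: p q => [[r1 h1] [j1 i1]] [[r2 h2] [j2 i2]] /=.
rewrite -!val_eqE /=.
move: i1 i2.
rewrite /phin !in_cons !in_nil !xpair_eqE /= !orbF !andbT !andbF /= !orbF.
case: r1 h1 => [|[|//]] _; case: r2 h2 => [|[|//]] _ /=; lia.
Qed.

Lemma connect_hom (T U : finType) (eU : rel U) (eT : rel T) (f : U -> T) :
  (forall x y, eU x y -> eT (f x) (f y)) ->
  forall a b, connect eU a b -> connect eT (f a) (f b).
Proof.
move=> hom a b /connectP [p pth ->]; apply/connectP; exists (map f p).
  by rewrite path_map; apply: sub_path pth => x y /hom.
by rewrite last_map.
Qed.

Lemma wc_transfer k (c : {ffun 'I_(k.*2) -> bool}) :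
  water_connected (@mob_adj (k.*2)) c = water_connected (@grid_adj k) (red c).
Proof.
have [psi c1 c2] := phi_bij k.
apply/forallP/forallP => H a.
- apply/forallP => b; apply/implyP; rewrite !redE => /andP[ca cb].
  have := implyP (forallP (H (phi a)) (phi b)) (introT andP (conj ca cb)).
  move/(connect_hom (eT := fun x y => [&& red c x, red c y & grid_adj x y]) (f := psi)).
  rewrite !c1; apply => x y /and3P[cx cy axy].
  by rewrite !redE !c2 cx cy adjE !c2.
- apply/forallP => b; apply/implyP => /andP[ca cb].
  have := implyP (forallP (H (psi a)) (psi b)); rewrite !redE !c2 ca cb => /(_ isT).
  move/(connect_hom (eT := fun x y => [&& c x, c y & mob_adj x y]) (f := @phi k)).
  rewrite !c2; apply => x y /and3P[cx cy axy].
  by rewrite -!redE cx cy -adjE.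
Qed.
Lemma incE n v (i : 'I_n) : 0 < v < n -> (i \in mob_incident n v) =
  [|| val i == v, val i == v.-1, val i == n - v | val i == (n - v).-1].
Proof.
move=> /andP[h1 h2]; rewrite inE /mob_corners !in_cons in_nil orbF.
have := ltn_ord i; lia.
Qed.

Lemma n2_transfer k (c : {ffun 'I_(k.*2) -> bool}) : 0 < k ->
  mob_N2box c = no_2x2_water (red c).
Proof.
move=> hk; apply/idP/idP => H.
- apply/forallP => j1; apply/forallP => j2; apply/implyP => /eqP e.
  have {}e : (j1 : nat).+1 = j2 := e.
  apply/negP => /forallP all4.
  have := all4 ord0; have := all4 ord_max; rewrite !redE.
  move=> /andP[a3 a4] /andP[a1 a2].
  have hv : j2 < (k.*2).+1 by have := ltn_ord j2; lia.
  have := implyP (forallP H (Ordinal hv)).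
  have hin : 0 < j2 < k.*2 by have := ltn_ord j2; lia.
  have hset : mob_incident (k.*2) j2 = [set x in [:: phi (ord0, j1); phi (ord0, j2);
       phi (ord_max, j1); phi (ord_max, j2)]].
    apply/setP => i; rewrite (incE _ hin) inE !in_cons in_nil orbF -!val_eqE /= /phin /=.
    have := ltn_ord j2; lia.
  rewrite /mob_interior /= hin /= hset cardsE.
  have -> : #|[:: phi (ord0, j1); phi (ord0, j2); phi (ord_max, j1); phi (ord_max, j2)]| = 4.
    apply/card_uniqP; rewrite /= !in_cons in_nil !orbF -!val_eqE /= /phin /=.
    have := ltn_ord j2; lia.
  move=> /(_ isT) /negP; apply; apply/forall_inP => i.
  rewrite inE !in_cons in_nil orbF.
  by case/or4P => /eqP->.
- apply/forallP => v; apply/implyP => /andP[/andP[v0 vn] c4]; apply/negP => /forall_inP all.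
  have hin : 0 < v < k.*2 by rewrite v0.
  case: (ltngtP v k) => hvk.
  + have h1 : v.-1 < k by lia.
    have := implyP (forallP (forallP H (Ordinal h1)) (Ordinal hvk)).
    move=> /(_ _) /negP; apply; first by rewrite /=; lia.
    apply/forallP => r; rewrite !redE; apply/andP; split; apply: all;
      rewrite (incE _ hin) /= /phin; case: r => [[|[|//]] ?] /=; lia.
  + have h1 : k.*2 - v < k by lia.
    have h2 : (k.*2 - v).-1 < k by lia.
    have := implyP (forallP (forallP H (Ordinal h2)) (Ordinal h1)).
    move=> /(_ _) /negP; apply; first by rewrite /=; lia.
    apply/forallP => r; rewrite !redE; apply/andP; split; apply: all;
      rewrite (incE _ hin) /= /phin; case: r => [[|[|//]] ?] /=; lia.
  + have h1 : k.-1 < k by lia.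
    have : mob_incident (k.*2) v \subset [set phi (ord0, Ordinal h1); phi (ord_max, Ordinal h1)].
      apply/subsetP => i; rewrite (incE _ hin) !inE -!val_eqE /= /phin /=.
      have := ltn_ord i; lia.
    move/subset_leq_card; rewrite cards2 (eqP c4); by case: (_ != _).
Qed.
Theorem lemma4p2 (k : nat) : 0 < k ->
  [/\ {in MBox k.*2, forall c, red c \in NRect k},
      {in MBox k.*2 &, injective (@red k)},
      (forall g, g \in NRect k -> exists2 c, c \in MBox k.*2 & red c = g)
    & #|MBox k.*2| = #|NRect k| ].
Proof.
move=> hk.
have okE (c : {ffun 'I_(k.*2) -> bool}) : mob_ok c = nuri_ok (red c).
  by rewrite /mob_ok /nuri_ok wc_transfer (n2_transfer _ hk).
have [psi c1 c2] := phi_bij k.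
have rinj : injective (@red k).
  move=> c d e; apply/ffunP => i.
  by rewrite -(c2 i) -!redE e.
have rsurj (g : {ffun 'I_2 * 'I_k -> bool}) : exists c, red c = g.
  exists [ffun i => g (psi i)].
  by apply/ffunP => p; rewrite redE ffunE c1.
have surj g : g \in NRect k -> exists2 c, c \in MBox k.*2 & red c = g.
  move=> hg; have [c hc] := rsurj g; exists c => //.
  by move: hg; rewrite !inE okE hc.
have hin : {in MBox k.*2, forall c, red c \in NRect k}.
  by move=> c; rewrite !inE okE.
split => //; first by move=> c d _ _; apply: rinj.
rewrite -(card_imset _ rinj); apply: eq_card => g.
apply/imsetP/idP => [[c hc ->]|hg]; first exact: hin.
by have [c hc <-] := surj g hg; exists c.
Qed.
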